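(* The equation $X^2+iY^2=(1+i)Z^2$ has a solution $(X,Y,Z)\in\mathbb{Z}[i]^3$ with $X,Y,Z\in O^I$, $\gcd(X,Y)\in U$ and $XYZ\neq0$ if and only if the system $$x-y=u+v,\qquad xy=iuv$$ has a solution $(x,y,u,v)\in\mathbb{Z}[i]^4$ with $x+y,\ u+v,\ u-v\in O^I$, $uv\equiv 0\pmod{1+i}$, $\gcd(x,y)\in U$ and $\gcd(u,v)\in U$.
   Context: $\mathbb{Z}[i]$ is the ring of Gaussian integers, $U=\{1,-1,i,-i\}$ its unit group; $R(\alpha),I(\alpha)$ are real and imaginary parts. $\gcd(x,y)\in U$ means no common non-unit divisor. $O=\{\alpha: R(\alpha)+I(\alpha)\equiv1\pmod 2\}$, $O^I=\{\alpha\in O: R(\alpha)\equiv 1\pmod 4\}$. *)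

(* Defs.v *)
From Stdlib Require Import ZArith.
Open Scope Z_scope.

Record gauss : Type := Gauss { re : Z; im : Z }.

Definition gadd (a b : gauss) : gauss := Gauss (re a + re b) (im a + im b).
Definition gopp (a : gauss) : gauss := Gauss (- re a) (- im a).
Definition gsub (a b : gauss) : gauss := gadd a (gopp b).
Definition gmul (a b : gauss) : gauss :=
  Gauss (re a * re b - im a * im b) (re a * im b + im a * re b).

Definition g0 : gauss := Gauss 0 0.
Definition g1 : gauss := Gauss 1 0.
Definition gi : gauss := Gauss 0 1.
Definition g1pi : gauss := Gauss 1 1.

Definition gdvd (d a : gauss) : Prop := exists q : gauss, a = gmul d q.

Definition gunit (u : gauss) : Prop :=
  u = Gauss 1 0 \/ u = Gauss (-1) 0 \/ u = Gauss 0 1 \/ u = Gauss 0 (-1).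

Definition gcd_unit (x y : gauss) : Prop :=
  forall d : gauss, gdvd d x -> gdvd d y -> gunit d.

Definition inO (a : gauss) : Prop := (re a + im a) mod 2 = 1.
Definition inOI (a : gauss) : Prop := inO a /\ re a mod 4 = 1.

(* Main.v *)
Require Import Defs.
From Stdlib Require Import ZArith Lia Ring.
Open Scope Z_scope.

Ltac zl := Z.div_mod_to_equations; lia.

Lemma gring : ring_theory g0 g1 gadd gmul gsub gopp (@eq gauss).
Proof.
  constructor; intros;
  repeat match goal with a : gauss |- _ => let r := fresh "r" in let i := fresh "i" in destruct a as [r i] end;
  unfold gsub, gadd, gmul, gopp, g0, g1; cbn [re im]; f_equal; ring.
Qed.
Add Ring gaussring : gring.

Definition g2 := gadd g1 g1.

Lemma gauss_ext a b : re a = re b -> im a = im b -> a = b.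
Proof. destruct a, b; simpl; intros; subst; reflexivity. Qed.

Lemma g1pi_eq : g1pi = gadd g1 gi.
Proof. reflexivity. Qed.

Lemma gdvd_add d a b : gdvd d a -> gdvd d b -> gdvd d (gadd a b).
Proof. intros [p ->] [q ->]. exists (gadd p q). ring. Qed.
Lemma gdvd_sub d a b : gdvd d a -> gdvd d b -> gdvd d (gsub a b).
Proof. intros [p ->] [q ->]. exists (gsub p q). ring. Qed.
Lemma gdvd_mulr d a c : gdvd d a -> gdvd d (gmul a c).
Proof. intros [p ->]. exists (gmul p c). ring. Qed.
Lemma gdvd_mull d a c : gdvd d a -> gdvd d (gmul c a).
Proof. intros [p ->]. exists (gmul c p). ring. Qed.

Lemma gdvd1_unit d : gdvd d g1 -> gunit d.
Proof.
  intros [[q1 q2] H]. destruct d as [d1 d2].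
  unfold gmul, g1 in H; simpl in H. injection H as H1 H2.
  assert (HN : (d1*d1+d2*d2)*(q1*q1+q2*q2) = 1).
  { transitivity ((d1*q1-d2*q2)*(d1*q1-d2*q2) + (d1*q2+d2*q1)*(d1*q2+d2*q1)).
    ring. rewrite <- H1, <- H2. ring. }
  assert (Hd : d1*d1+d2*d2 = 1).
  { assert (0 <= d1*d1+d2*d2) by nia. assert (0 <= q1*q1+q2*q2) by nia.
    destruct (Z.eq_dec (d1*d1+d2*d2) 0) as [E|E]; [rewrite E in HN; lia|].
    destruct (Z.eq_dec (q1*q1+q2*q2) 0) as [E2|E2]; [rewrite E2 in HN; lia|].
    nia. }
  assert (d1 = -1 \/ d1 = 0 \/ d1 = 1) as [->|[->| ->]] by nia;
  (assert (d2 = -1 \/ d2 = 0 \/ d2 = 1) as [->|[->| ->]] by nia);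
  first [exfalso; lia | unfold gunit; repeat (try (left; reflexivity); right); reflexivity].
Qed.

Lemma gdvdi_1 d : gdvd d gi -> gdvd d g1.
Proof. intros H. assert (E : g1 = gmul gi (Gauss 0 (-1))) by reflexivity.
  rewrite E. apply gdvd_mulr, H. Qed.

Definition gnorm a := re a * re a + im a * im a.

Lemma euclid a b : gnorm b > 0 -> exists q r, a = gadd (gmul b q) r /\ gnorm r < gnorm b.
Proof.
  destruct a as [a1 a2], b as [b1 b2]. unfold gnorm; simpl. intros Hn.
  remember ((2*(a1*b1+a2*b2)+(b1*b1+b2*b2))/(2*(b1*b1+b2*b2))) as q1 eqn:Hq1.
  remember ((2*(a2*b1-a1*b2)+(b1*b1+b2*b2))/(2*(b1*b1+b2*b2))) as q2 eqn:Hq2.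
  exists (Gauss q1 q2), (Gauss (a1 - (b1*q1 - b2*q2)) (a2 - (b1*q2 + b2*q1))).
  split. { unfold gadd, gmul; simpl; f_equal; ring. }
  simpl.
  set (n := b1*b1+b2*b2) in *.
  assert (B1 : -n <= 2*((a1*b1+a2*b2) - q1*n) < n).
  { pose proof (Z.div_mod (2*(a1*b1+a2*b2)+n) (2*n) ltac:(lia)) as E.
    pose proof (Z.mod_pos_bound (2*(a1*b1+a2*b2)+n) (2*n) ltac:(lia)).
    rewrite <- Hq1 in E. lia. }
  assert (B2 : -n <= 2*((a2*b1-a1*b2) - q2*n) < n).
  { pose proof (Z.div_mod (2*(a2*b1-a1*b2)+n) (2*n) ltac:(lia)) as E.
    pose proof (Z.mod_pos_bound (2*(a2*b1-a1*b2)+n) (2*n) ltac:(lia)).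
    rewrite <- Hq2 in E. lia. }
  set (r1 := a1 - (b1*q1 - b2*q2)). set (r2 := a2 - (b1*q2 + b2*q1)).
  set (e1 := (a1*b1+a2*b2) - q1*n) in *. set (e2 := (a2*b1-a1*b2) - q2*n) in *.
  assert (Id : (r1*r1+r2*r2)*n = e1*e1+e2*e2).
  { unfold r1, r2, e1, e2, n. ring. }
  assert (0 <= (n+2*e1)*(n-2*e1)) by (apply Z.mul_nonneg_nonneg; lia).
  assert (0 <= (n+2*e2)*(n-2*e2)) by (apply Z.mul_nonneg_nonneg; lia).
  assert (4*((r1*r1+r2*r2)*n) <= 2*(n*n)) by nia.
  nia.
Qed.

Lemma bez_aux (k : nat) : forall a b, (Z.to_nat (gnorm b) < k)%nat ->
  exists g s t, gdvd g a /\ gdvd g b /\ g = gadd (gmul s a) (gmul t b).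
Proof.
  induction k as [|k IH]; intros a b Hk; [lia|].
  destruct (Z.eq_dec (gnorm b) 0) as [H0|H0].
  - assert (Hb : b = g0).
    { destruct b as [b1 b2]; unfold gnorm in H0; simpl in H0.
      assert (b1 = 0) by nia. assert (b2 = 0) by nia. subst; reflexivity. }
    exists a, g1, g0. split; [exists g1; ring|]. split; [exists g0; rewrite Hb; ring|ring].
  - assert (gnorm b >= 0) by (unfold gnorm; nia).
    destruct (euclid a b ltac:(lia)) as (q & r & Ha & Hr).
    assert (gnorm r >= 0) by (unfold gnorm; nia).
    destruct (IH b r ltac:(lia)) as (g & s & t & [pb Hpb] & [pr Hpr] & Hg).
    exists g, t, (gsub s (gmul t q)). split; [|split].
    + exists (gadd (gmul pb q) pr). rewrite Ha, Hpb, Hpr. ring.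
    + exists pb. exact Hpb.
    + rewrite Hg, Ha. ring.
Qed.

Lemma bezout a b : gcd_unit a b -> exists s t, gadd (gmul s a) (gmul t b) = g1.
Proof.
  intros H. destruct (bez_aux (S (Z.to_nat (gnorm b))) a b ltac:(lia)) as (g & s & t & Ha & Hb & Hg).
  assert (Hu := H g Ha Hb).
  assert (exists c, gmul c g = g1) as [c Hc].
  { destruct Hu as [->|[->|[->| ->]]];
    [exists (Gauss 1 0)|exists (Gauss (-1) 0)|exists (Gauss 0 (-1))|exists (Gauss 0 1)]; reflexivity. }
  exists (gmul c s), (gmul c t). rewrite <- Hc, Hg. ring.
Qed.

Lemma inO_mul a b : inO a -> inO b -> inO (gmul a b).
Proof.
  destruct a as [a1 a2], b as [b1 b2]; unfold inO; simpl. intros Ha Hb.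
  assert (exists k, a1 = 2*k+1-a2) as [k ->] by (exists ((a1+a2)/2); zl).
  assert (exists l, b1 = 2*l+1-b2) as [l ->] by (exists ((b1+b2)/2); zl).
  set (E := 2*k*l+k+l - a2*b2).
  replace ((2 * k + 1 - a2) * (2 * l + 1 - b2) - a2 * b2 + ((2 * k + 1 - a2) * b2 + a2 * (2 * l + 1 - b2)))
    with (1 + E*2) by (unfold E; ring).
  rewrite Z.mod_add by lia. reflexivity.
Qed.

Lemma inO_nz a : inO a -> a <> g0.
Proof. intros H E. subst. unfold inO in H. simpl in H. discriminate. Qed.

Lemma odd_bez X : inOI X -> exists al be,
  gadd (gmul X al) (gmul (gmul g1pi (gmul g2 g2)) be) = g1.
Proof.
  destruct X as [x1 x2]. unfold inOI, inO; simpl. intros [H1 H2].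
  assert (exists a, x1 = 4*a+1) as [a ->] by (exists (x1/4); zl).
  assert (exists b, x2 = 2*b) as [b ->] by (exists (x2/2); zl).
  set (N := (4*a+1)*(4*a+1)+(2*b)*(2*b)).
  set (c := 4*a*a+2*a+b*b).
  exists (Gauss ((4*a+1)*N) (-(2*b)*N)), (Gauss (-(c+2*c*c)) (c+2*c*c)).
  unfold g2, g1pi, g1, gadd, gmul; apply gauss_ext; cbn [re im]; unfold N, c; ring.
Qed.

Lemma g2_cancel a b : gmul g2 a = gmul g2 b -> a = b.
Proof. destruct a as [a1 a2], b as [b1 b2]; unfold g2, g1, gadd, gmul. intros H.
  pose proof (f_equal re H) as E1. pose proof (f_equal im H) as E2.
  cbn [re im] in E1, E2. apply gauss_ext; cbn [re im]; lia. Qed.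

Lemma fwd_core x y u v :
  gadd (gmul (gadd x y) (gadd x y)) (gmul gi (gmul (gsub u v) (gsub u v)))
    = gmul g1pi (gmul (gadd u v) (gadd u v)) ->
  gsub x y = gadd u v ->
  gcd_unit (gadd x y) (gsub u v) ->
  gmul x y = gmul gi (gmul u v) /\ gcd_unit x y /\ gcd_unit u v.
Proof.
  intros Heq Hz Hg. destruct (bezout _ _ Hg) as (s & t & Hb).
  split; [|split].
  - apply g2_cancel, g2_cancel.
    assert (E1 : gmul g2 (gmul g2 (gmul x y)) =
      gsub (gmul (gadd x y) (gadd x y)) (gmul (gsub x y) (gsub x y))) by (unfold g2; ring).
    rewrite Hz in E1. rewrite E1.
    transitivity (gsub (gadd (gmul (gadd x y) (gadd x y)) (gmul gi (gmul (gsub u v) (gsub u v))))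
       (gadd (gmul (gadd u v) (gadd u v)) (gmul gi (gmul (gsub u v) (gsub u v))))); [ring|].
    rewrite Heq, g1pi_eq. unfold g2. ring.
  - intros d Hx Hy.
    assert (dX : gdvd d (gadd x y)) by (apply gdvd_add; auto).
    assert (dZ : gdvd d (gadd u v)) by (rewrite <- Hz; apply gdvd_sub; auto).
    apply gdvd1_unit, gdvdi_1.
    assert (E : gi = gadd (gmul (gadd x y) (gadd (gmul gi (gmul (gmul s s) (gadd x y)))
                   (gmul (gmul g2 gi) (gmul (gmul s t) (gsub u v)))))
               (gmul (gmul t t) (gsub (gmul g1pi (gmul (gadd u v) (gadd u v))) (gmul (gadd x y) (gadd x y))))).
    { rewrite <- Heq.
      transitivity (gmul gi (gmul (gadd (gmul s (gadd x y)) (gmul t (gsub u v)))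
                                  (gadd (gmul s (gadd x y)) (gmul t (gsub u v))))).
      - rewrite Hb. ring.
      - unfold g2. ring. }
    rewrite E. apply gdvd_add; [apply gdvd_mulr; exact dX|].
    apply gdvd_mull, gdvd_sub; [apply gdvd_mull, gdvd_mulr; exact dZ|apply gdvd_mulr; exact dX].
  - intros d Hu Hv.
    assert (dY : gdvd d (gsub u v)) by (apply gdvd_sub; auto).
    assert (dZ : gdvd d (gadd u v)) by (apply gdvd_add; auto).
    apply gdvd1_unit.
    assert (E : g1 = gadd (gmul (gmul s s) (gsub (gmul g1pi (gmul (gadd u v) (gadd u v)))
                                              (gmul gi (gmul (gsub u v) (gsub u v)))))
        (gmul (gsub u v) (gadd (gmul (gmul g2 s) (gmul t (gadd x y))) (gmul (gmul t t) (gsub u v))))).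
    { rewrite <- Heq.
      transitivity (gmul (gadd (gmul s (gadd x y)) (gmul t (gsub u v)))
                         (gadd (gmul s (gadd x y)) (gmul t (gsub u v)))).
      - rewrite Hb. ring.
      - unfold g2. ring. }
    rewrite E. apply gdvd_add; [|apply gdvd_mulr; exact dY].
    apply gdvd_mull, gdvd_sub; [apply gdvd_mull, gdvd_mulr; exact dZ|apply gdvd_mull, gdvd_mulr; exact dY].
Qed.

Lemma rev_eq x y u v : gsub x y = gadd u v -> gmul x y = gmul gi (gmul u v) ->
  gadd (gmul (gadd x y) (gadd x y)) (gmul gi (gmul (gsub u v) (gsub u v)))
    = gmul g1pi (gmul (gadd u v) (gadd u v)).
Proof.
  intros H1 H2.
  transitivity (gadd (gadd (gmul (gsub x y) (gsub x y)) (gmul (gmul g2 g2) (gmul x y)))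
                     (gmul gi (gmul (gsub u v) (gsub u v)))); [unfold g2; ring|].
  rewrite H1, H2, g1pi_eq. unfold g2. ring.
Qed.

Lemma rev_core x y u v : gsub x y = gadd u v -> gmul x y = gmul gi (gmul u v) ->
  inOI (gadd x y) -> gcd_unit x y -> gcd_unit (gadd x y) (gsub u v).
Proof.
  intros H1 H2 HO Hg d dX dY.
  pose proof (rev_eq _ _ _ _ H1 H2) as Heq. rewrite <- H1 in Heq.
  destruct (bezout _ _ Hg) as (a & b & Hb).
  destruct (odd_bez _ HO) as (al & be & Hob).
  assert (E : gmul g1pi (gmul g2 g2) =
     gadd (gmul (gadd x y) (gmul g1pi (gadd (gmul (gmul (gadd a b) (gadd a b)) (gadd x y))
                                     (gmul g2 (gmul (gmul (gadd a b) (gsub a b)) (gsub x y))))))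
          (gmul (gmul (gsub a b) (gsub a b)) (gmul g1pi (gmul (gsub x y) (gsub x y))))).
  { transitivity (gmul g1pi (gmul (gmul g2 (gadd (gmul a x) (gmul b y))) (gmul g2 (gadd (gmul a x) (gmul b y))))).
    - rewrite Hb. ring.
    - unfold g2. ring. }
  rewrite <- Heq in E.
  assert (d4 : gdvd d (gmul g1pi (gmul g2 g2))).
  { rewrite E. apply gdvd_add; [apply gdvd_mulr; exact dX|].
    apply gdvd_mull, gdvd_add; [apply gdvd_mulr; exact dX|apply gdvd_mull, gdvd_mulr; exact dY]. }
  apply gdvd1_unit. rewrite <- Hob. apply gdvd_add; apply gdvd_mulr; assumption.
Qed.

Theorem proposition4p20 :
  (exists X Y Z : gauss,
      gadd (gmul X X) (gmul gi (gmul Y Y)) = gmul g1pi (gmul Z Z) /\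
      inOI X /\ inOI Y /\ inOI Z /\
      gcd_unit X Y /\
      gmul X (gmul Y Z) <> g0)
  <->
  (exists x y u v : gauss,
      gsub x y = gadd u v /\
      gmul x y = gmul gi (gmul u v) /\
      inOI (gadd x y) /\ inOI (gadd u v) /\ inOI (gsub u v) /\
      gdvd g1pi (gmul u v) /\
      gcd_unit x y /\ gcd_unit u v).
Proof.
  split.
  - intros (X & Y & Z & Heq & HX & HY & HZ & Hg & Hnz).
    set (x := Gauss ((re X + re Z)/2) ((im X + im Z)/2)).
    set (y := Gauss ((re X - re Z)/2) ((im X - im Z)/2)).
    set (u := Gauss ((re Z + re Y)/2) ((im Z + im Y)/2)).
    set (v := Gauss ((re Z - re Y)/2) ((im Z - im Y)/2)).
    destruct HX as [HX1 HX2], HY as [HY1 HY2], HZ as [HZ1 HZ2].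
    unfold inO in *.
    assert (Exy : gadd x y = X) by (apply gauss_ext; simpl; zl).
    assert (Ezxy : gsub x y = Z) by (apply gauss_ext; simpl; zl).
    assert (Ezuv : gadd u v = Z) by (apply gauss_ext; simpl; zl).
    assert (Eyuv : gsub u v = Y) by (apply gauss_ext; simpl; zl).
    assert (Par : (re u + im u) mod 2 = 0 \/ (re v + im v) mod 2 = 0) by (simpl; zl).
    clearbody x y u v.
    rewrite <- Exy, <- Ezuv, <- Eyuv in Heq. rewrite <- Exy, <- Eyuv in Hg.
    rewrite <- Ezuv in Ezxy.
    destruct (fwd_core x y u v Heq Ezxy Hg) as (C1 & C2 & C3).
    exists x, y, u, v.
    split; [exact Ezxy|]. split; [exact C1|].
    split; [rewrite Exy; split; assumption|].
    split; [rewrite Ezuv; split; assumption|].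
    split; [rewrite Eyuv; split; assumption|].
    split; [|split; assumption].
    assert (H1 : forall w, (re w + im w) mod 2 = 0 -> gdvd g1pi w).
    { intros [w1 w2] Hw. simpl in Hw. exists (Gauss ((w1+w2)/2) ((w1+w2)/2 - w1)).
      unfold gmul, g1pi; apply gauss_ext; cbn [re im]; zl. }
    destruct Par as [P|P]; [apply gdvd_mulr|apply gdvd_mull]; apply H1; exact P.
  - intros (x & y & u & v & H1 & H2 & Hxy & Huv & Hsuv & _ & Hg & _).
    exists (gadd x y), (gsub u v), (gadd u v).
    split; [apply rev_eq; assumption|].
    split; [assumption|]. split; [assumption|]. split; [assumption|].
    split; [apply rev_core; assumption|].
    apply inO_nz. apply inO_mul; [apply Hxy|apply inO_mul; [apply Hsuv|apply Huv]].
Qed.
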